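(* Let $n\ge 1$, $m\ge 0$ be integers and let non-negative integers $r_0,r_1,\dots,r_n$ satisfy $$r_n=0,\quad r_{n-1}=m,\quad r_\ell\ge 2r_{\ell+1}\ \text{ for } \ell=n-2,\dots,0.$$ Let $k\ge 2r_0+1$ (so $k\ge 2^n m+1$). Let $T$ be an $n$-simplex and define the subsets of $\mathbb T^n_k$: $$S_0(\texttt v)=D(\texttt v,r_0)\quad(\texttt v\in\Delta_0(T)),$$ $$S_\ell(f)=D(f,r_\ell)\setminus\Big[\bigcup_{i=0}^{\ell-1}\bigcup_{e\in\Delta_i(f)}D(e,r_i)\Big]\quad (f\in\Delta_\ell(T),\ \ell=1,\dots,n-1),$$ $$S_n(T)=\mathbb T^n_k\setminus\Big[\bigcup_{i=0}^{n-1}\bigcup_{f\in\Delta_i(T)}D(f,r_i)\Big].$$ Then the sets $S_\ell(f)$, $f\in\Delta_\ell(T)$, $\ell=0,\dots,n$, are pairwise disjoint and their union is $\mathbb T^n_k$. Consequently $$\mathbb P_k(T)=\bigoplus_{\ell=0}^n\bigoplus_{f\in\Delta_\ell(T)}\mathbb P_k(S_\ell(f))\quad\text{(direct sum)}.$$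
   Context: $T\subset\mathbb R^n$ is an $n$-simplex with vertices $\texttt v_0,\dots,\texttt v_n$ and barycentric coordinates $\lambda_0,\dots,\lambda_n$. $\mathbb N$ includes $0$. The simplicial lattice is $\mathbb T^n_k=\{\alpha=(\alpha_0,\dots,\alpha_n)\in\mathbb N^{n+1}:\sum_i\alpha_i=k\}$, and $\lambda^\alpha=\prod_i\lambda_i^{\alpha_i}$. For $S\subseteq\mathbb T^n_k$, $\mathbb P_k(S)=\mathrm{span}\{\lambda^\alpha:\alpha\in S\}$; $\mathbb P_k(T)$ is the space of polynomials of degree $\le k$ on $T$. $\Delta_\ell(T)$ is the set of $\ell$-dimensional sub-simplices (faces) of $T$; each $f\in\Delta_\ell(T)$ is identified with the set of indices of its vertices, $f\subseteq\{0,\dots,n\}$, $|f|=\ell+1$, and $f^*=\{0,\dots,n\}\setminus f$; a vertex $\texttt v_i$ is identified with $\{i\}$. For $\alpha\in\mathbb T^n_k$, $|\alpha_{f^*}|=\sum_{i\in f^*}\alpha_i$ (the distance $\mathrm{dist}(\alpha,f)$). The lattice tube of $f$ with radius $r$ is $D(f,r)=\{\alpha\in\mathbb T^n_k:|\alpha_{f^*}|\le r\}$. *)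

(* Defs.v *)
From HB Require Import structures.
From mathcomp Require Import all_boot all_order all_algebra.
From mathcomp Require Import mpoly.
Set Implicit Arguments. Unset Strict Implicit. Unset Printing Implicit Defensive.
Import Order.TTheory GRing.Theory Num.Theory.
Local Open Scope ring_scope.

(* Simplicial lattice T^n_k : multi-indices alpha on the vertex set {0..n}
   ('I_n.+1) with entries <= k and total sum k. *)
Definition lat (n k : nat) : {set {ffun 'I_n.+1 -> 'I_k.+1}} :=
  [set a : {ffun 'I_n.+1 -> 'I_k.+1} | (\sum_i (a i : nat) == k)%N].

(* |alpha_{f*}| = sum over vertices not in f *)
Definition distf (n k : nat) (f : {set 'I_n.+1}) (a : {ffun 'I_n.+1 -> 'I_k.+1}) : nat :=
  (\sum_(i in ~: f) (a i : nat))%N.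

Definition tube (n k : nat) (f : {set 'I_n.+1}) (r : nat) :=
  [set a in lat n k | (distf f a <= r)%N].

(* Delta_l(T): l-dimensional faces, as vertex-index sets of size l+1 *)
Definition faces (n l : nat) : {set {set 'I_n.+1}} :=
  [set f : {set 'I_n.+1} | #|f| == l.+1].

(* S_l(f) = D(f, r_l) \ U_{i<l} U_{e in Delta_i(f)} D(e, r_i).
   For l = 0 this is D(v, r_0); for l = n, f = T it is T^n_k minus the union
   (since D(T, r_n) = T^n_k). *)
Definition Sset (n k : nat) (r : nat -> nat) (l : nat) (f : {set 'I_n.+1}) :=
  tube k f (r l) :\:
    \bigcup_(i < l) \bigcup_(e in faces n i | e \subset f) tube k e (r i).

Definition bmono (R : realFieldType) (n k : nat) (lam : 'I_n.+1 -> {mpoly R[n]})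
  (a : {ffun 'I_n.+1 -> 'I_k.+1}) : {mpoly R[n]} :=
  \prod_i (lam i) ^+ (a i).

Definition inPk (R : realFieldType) (n k : nat) (lam : 'I_n.+1 -> {mpoly R[n]})
  (S : {set {ffun 'I_n.+1 -> 'I_k.+1}}) (p : {mpoly R[n]}) : Prop :=
  exists c : {ffun 'I_n.+1 -> 'I_k.+1} -> R,
    p = \sum_(a in S) c a *: bmono lam a.

(* p belongs to P_k(T): total degree <= k *)
Definition degle (R : realFieldType) (n k : nat) (p : {mpoly R[n]}) : bool :=
  (msize p <= k.+1)%N.

(* Main.v *)
Require Import Defs.
From HB Require Import structures.
From mathcomp Require Import all_boot all_order all_algebra.
From mathcomp Require Import mpoly.
From mathcomp Require Import zify.
From Stdlib Require Import ClassicalEpsilon.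
Import Order.TTheory GRing.Theory Num.Theory.
Local Open Scope ring_scope.
Set Implicit Arguments. Unset Strict Implicit. Unset Printing Implicit Defensive.

Section Comb.
Variables (n k : nat) (r : nat -> nat).
Local Notation A := {ffun 'I_n.+1 -> 'I_k.+1}.

Lemma tube_lat (f : {set 'I_n.+1}) s (a : A) : a \in tube k f s -> a \in lat n k.
Proof. by rewrite inE => /andP[]. Qed.

Lemma Sset_tube l (f : {set 'I_n.+1}) (a : A) : a \in Sset k r l f -> a \in tube k f (r l).
Proof. by rewrite inE => /andP[]. Qed.

Lemma SsetP l (f : {set 'I_n.+1}) (a : A) :
  a \in Sset k r l f <->
  a \in tube k f (r l) /\ (forall i (e : {set 'I_n.+1}), (i < l)%N -> #|e| = i.+1 -> e \subset f ->
     a \notin tube k e (r i)).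
Proof.
rewrite inE; split.
  case/andP=> H1 H2; split=> // i e il ce ef; apply/negP=> He.
  move: H1; apply/negP; rewrite negbK; apply/bigcupP; exists (Ordinal il) => //.
  by apply/bigcupP; exists e => //; rewrite inE ce eqxx ef.
case=> H2 H1; rewrite H2 andbT; apply/negP=> /bigcupP[i _ /bigcupP[e]].
by rewrite inE => /andP[/eqP ce ef]; apply/negP; apply: H1.
Qed.

Lemma distf_inter (f1 f2 : {set 'I_n.+1}) (a : A) :
  (distf (f1 :&: f2) a <= distf f1 a + distf f2 a)%N.
Proof.
rewrite /distf [X in (X <= _)%N]big_mkcond [X in (_ <= X + _)%N]big_mkcond [X in (_ <= _ + X)%N]big_mkcond -big_split /=.
apply: leq_sum => i _; rewrite !inE negb_and.
by case: (i \in f1); case: (i \in f2) => /=; rewrite ?leq_addr ?leq_addl.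
Qed.

Lemma distf0 (a : A) : a \in lat n k -> distf set0 a = k.
Proof.
rewrite inE => /eqP E; rewrite -[RHS]E /distf setC0.
by apply: eq_bigl => i; rewrite inE.
Qed.

Lemma distfT (a : A) : distf setT a = 0%N.
Proof. by rewrite /distf setCT big_set0. Qed.

Hypothesis hn : (1 <= n)%N.
Hypothesis rn : r n = 0%N.
Hypothesis hr : forall l : nat, (l.+2 <= n)%N -> (2 * r l.+1 <= r l)%N.
Hypothesis hk : (2 * r 0%N + 1 <= k)%N.

Lemma rdec i j : (i < j)%N -> (j < n)%N -> (2 * r j <= r i)%N.
Proof.
elim: j => // j IH; rewrite ltnS leq_eqVlt => /orP[/eqP <-|ij] jn.
  by apply: hr.
have := hr jn; have := IH ij (ltnW jn); lia.
Qed.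

Lemma rmono i j : (i <= j)%N -> (j < n)%N -> (r j <= r i)%N.
Proof.
rewrite leq_eqVlt => /orP[/eqP ->//|ij] jn.
have := rdec ij jn; lia.
Qed.

Lemma card_lt_n (f1 f2 : {set 'I_n.+1}) : ~~ (f2 \subset f1) -> (#|f1| < n.+1)%N.
Proof.
move=> H; have mc := max_card (mem f1); rewrite card_ord in mc.
rewrite ltn_neqAle mc andbT.
apply: contra H => /eqP c; have -> : f1 = setT.
  by apply/eqP; rewrite eqEcard subsetT /= cardsT card_ord c.
by rewrite subsetT.
Qed.

Lemma disj_sub l1 l2 (f1 f2 : {set 'I_n.+1}) (a : A) :
  #|f1| = l1.+1 -> #|f2| = l2.+1 -> (l1, f1) != (l2, f2) -> f1 \subset f2 ->
  a \in Sset k r l1 f1 -> a \in Sset k r l2 f2 -> False.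
Proof.
move=> c1 c2 ne sub /SsetP[t1 _] /SsetP[_ H2].
have := subset_leqif_card sub; rewrite c1 c2 => -[le12 eq12].
have [l12|] := ltnP l1 l2.
  by move: (H2 l1 f1 l12 c1 sub); rewrite t1.
move=> l21; have e : l1 = l2 by apply/eqP; rewrite eqn_leq l21 -ltnS le12.
subst l2; move: eq12; rewrite eqxx => /esym sub2.
have : f1 = f2 by apply/eqP; rewrite eqEsubset sub sub2.
by move=> e; move: ne; rewrite e eqxx.
Qed.

Lemma Sset_disj l1 l2 (f1 f2 : {set 'I_n.+1}) :
  f1 \in faces n l1 -> f2 \in faces n l2 -> (l1, f1) != (l2, f2) ->
  [disjoint Sset k r l1 f1 & Sset k r l2 f2].
Proof.
rewrite !inE => /eqP c1 /eqP c2 ne.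
apply/pred0P => a /=; apply/negP => /andP[a1 a2].
have [s12|ns12] := boolP (f1 \subset f2); first exact: (disj_sub c1 c2 ne s12 a1 a2).
have [s21|ns21] := boolP (f2 \subset f1).
  by apply: (disj_sub c2 c1 _ s21 a2 a1); rewrite eq_sym.
have l1n : (l1 < n)%N by have := card_lt_n ns21; rewrite c1.
have l2n : (l2 < n)%N by have := card_lt_n ns12; rewrite c2.
have := distf_inter f1 f2 a.
move: (a1) (a2) => /SsetP[t1 H1] /SsetP[t2 H2].
have al : a \in lat n k by apply: tube_lat t1.
move: t1 t2; rewrite !inE => /andP[_ d1] /andP[_ d2] dI.
have [g0|gn0] := eqVneq (f1 :&: f2) set0.
  move: dI; rewrite g0 distf0 //.
  have := rmono (leq0n l1) l1n; have := rmono (leq0n l2) l2n; lia.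
have pg1 : f1 :&: f2 \proper f1.
  by rewrite properEneq subsetIl andbT; apply: contra ns12 => /eqP <-; rewrite subsetIr.
have pg2 : f1 :&: f2 \proper f2.
  by rewrite properEneq subsetIr andbT; apply: contra ns21 => /eqP <-; rewrite subsetIl.
have cg : #|f1 :&: f2| = (#|f1 :&: f2|.-1).+1.
  by rewrite prednK // card_gt0.
set i := (#|f1 :&: f2|).-1 in cg.
have i1 : (i < l1)%N by have := proper_card pg1; rewrite c1 cg.
have i2 : (i < l2)%N by have := proper_card pg2; rewrite c2 cg.
have := H1 i _ i1 cg (subsetIl _ _); rewrite /tube in_set al /=.
have := rdec i1 l1n; have := rdec i2 l2n; lia.
Qed.

Lemma Sset_sub l (f : {set 'I_n.+1}) : Sset k r l f \subset lat n k.
Proof. by apply/subsetP => a /Sset_tube /tube_lat. Qed.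

Lemma Sset_cover (a : A) : a \in lat n k ->
  exists l : 'I_n.+1, exists2 f, f \in faces n l & a \in Sset k r l f.
Proof.
move=> al.
pose P i := [exists e : {set 'I_n.+1}, (e \in faces n i) && (a \in tube k e (r i))].
have Pn : P n.
  apply/existsP; exists setT; move: (al); rewrite !inE cardsT card_ord eqxx distfT => ->.
  done.
case: (ex_minnP (ex_intro P n Pn)) => l /existsP[e /andP[fe te]] lmin.
have ln : (l < n.+1)%N by rewrite ltnS; apply: lmin.
exists (Ordinal ln); exists e => //=; apply/SsetP; split=> // i e' il ce' _.
apply/negP => te'; have : ~~ (l <= i)%N by rewrite -ltnNge.
move/negP; apply; apply: lmin; by apply/existsP; exists e'; rewrite te' inE ce' eqxx.
Qed.

Lemma Sset_union : lat n k = \bigcup_(l < n.+1) \bigcup_(f in faces n l) Sset k r l f.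
Proof.
apply/setP => a; apply/idP/idP.
  move/Sset_cover => [l [f fl af]].
  by apply/bigcupP; exists l => //; apply/bigcupP; exists f.
by case/bigcupP => l _ /bigcupP[f _ /Sset_tube /tube_lat].
Qed.

Lemma Sset_count (a : A) : a \in lat n k ->
  (\sum_(l < n.+1) \sum_(f in faces n l) (a \in Sset k r l f))%N = 1%N.
Proof.
move=> /Sset_cover [l0 [f0 f0l a0]].
rewrite (bigD1 l0) //= (bigD1 f0) //= a0 big1 /=; last first.
  move=> f /andP[ff ne]; case: (boolP (a \in _)) => // af; exfalso.
  have := Sset_disj f0l ff; rewrite xpair_eqE eqxx /= eq_sym ne => /(_ isT).
  by move/pred0P/(_ a) => /=; rewrite a0 af.
rewrite big1 // => l ne; rewrite big1 // => f ff; case: (boolP (a \in _)) => // af; exfalso.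
have := Sset_disj f0l ff; rewrite xpair_eqE eq_sym.
have -> : (l == l0 :> nat) = false by apply/negbTE.
by move=> /(_ isT)/pred0P/(_ a) /=; rewrite a0 af.
Qed.

Lemma faces_lt l (f : {set 'I_n.+1}) : f \in faces n l -> (l < n.+1)%N.
Proof.
rewrite inE => /eqP c; have mc := max_card (mem f); rewrite card_ord in mc.
by rewrite -ltnS -c.
Qed.

Lemma sum_single (V : zmodType) (F : nat -> {set 'I_n.+1} -> V) (a : A) l0 f0 :
  f0 \in faces n l0 -> a \in Sset k r l0 f0 ->
  \sum_(l < n.+1) \sum_(f in faces n l) F l f *+ (a \in Sset k r l f) = F l0 f0.
Proof.
move=> f0l a0.
have l0n := faces_lt f0l.
rewrite (bigD1 (Ordinal l0n)) //= (bigD1 f0) //= a0 mulr1n.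
rewrite big1 ?addr0; last first.
  move=> f /andP[ff ne]; case: (boolP (a \in _)) => [af|]; last by rewrite mulr0n.
  exfalso; have := Sset_disj f0l ff; rewrite xpair_eqE eqxx /= eq_sym ne => /(_ isT).
  by move/pred0P/(_ a) => /=; rewrite a0 af.
rewrite big1 ?addr0 // => l ne; rewrite big1 // => f ff.
case: (boolP (a \in _)) => [af|]; last by rewrite mulr0n.
exfalso; have := Sset_disj f0l ff; rewrite xpair_eqE eq_sym.
have -> : (l == l0 :> nat) = false by apply/negbTE; apply: contra ne => /eqP E; apply/eqP/val_inj.
by move=> /(_ isT)/pred0P/(_ a) /=; rewrite a0 af.
Qed.

End Comb.

Lemma sum_part n k r (V : zmodType) (G : nat -> {set 'I_n.+1} -> {ffun 'I_n.+1 -> 'I_k.+1} -> V) :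
  \sum_(l < n.+1) \sum_(f in faces n l) \sum_(a in Sset k r l f) G l f a =
  \sum_(a in lat n k) \sum_(l < n.+1) \sum_(f in faces n l) G l f a *+ (a \in Sset k r l f).
Proof.
transitivity (\sum_a \sum_(l < n.+1) \sum_(f in faces n l) G l f a *+ (a \in Sset k r l f)).
  symmetry; rewrite exchange_big; apply: eq_bigr => l _; rewrite exchange_big.
  apply: eq_bigr => f _; rewrite [RHS]big_mkcond; apply: eq_bigr => a _; by rewrite mulrb.
symmetry; rewrite big_mkcond /=; symmetry.
apply: eq_bigr => a _; case: ifP => // al.
rewrite big1 // => l _; rewrite big1 // => f _.
case: (boolP (a \in _)) => [af|]; last by rewrite mulr0n.
by move: (subsetP (@Sset_sub n k r l f) a af); rewrite al.
Qed.

Section Aff.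
Variables (R : realFieldType) (n : nat).
Implicit Types p q : {mpoly R[n]}.

Definition aff p := (msize p <= 2)%N.

Lemma aff_expand p : aff p -> p = (p@_0)%:MP + \sum_(j < n) p@_U_(j) *: 'X_j.
Proof.
move=> sp; apply/mpolyP => m.
rewrite mcoeffD mcoeffC raddf_sum /=.
under eq_bigr do rewrite mcoeffZ mcoeffX.
have [->|m0] := eqVneq m 0%MM.
  rewrite mulr1 big1 ?addr0 // => j _; rewrite mnm1_eq0 mulr0 //.
rewrite mulr0 add0r.
have [/eqP/mdeg1P [i /eqP mi]|md1] := eqVneq (mdeg m) 1%N.
  subst m; rewrite (bigD1 i) //= eq_refl mulr1 big1 ?addr0 // => j /negbTE ji.
  by rewrite eq_mnm1 ji mulr0.
rewrite big1; last first.
  move=> j _; have [E|] := eqVneq U_(j)%MM m; last by rewrite mulr0.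
  by move: md1; rewrite -E mdeg1.
apply: memN_msupp_eq0; apply: msize_mdeg_ge; apply: leq_trans sp _.
move: m0 md1; rewrite -mdeg_eq0; lia.
Qed.

Lemma aff_eval p x : aff p -> p.@[x] = p@_0 + \sum_(j < n) p@_U_(j) * x j.
Proof.
move=> sp; rewrite {1}(aff_expand sp) mevalD mevalC raddf_sum /=.
by under eq_bigr do rewrite mevalZ mevalXU.
Qed.

Definition dlt (i : 'I_n) : 'I_n -> R := fun j => (j == i)%:R.

Lemma sum_delta (T : finType) (F : T -> R) (i : T) : \sum_j F j * (j == i)%:R = F i.
Proof.
rewrite (bigD1 i) //= eqxx mulr1 big1 ?addr0 // => j /negbTE ->; exact: mulr0.
Qed.

Lemma sum_delta1 (T : finType) (i : T) : \sum_j (j == i)%:R = 1 :> R.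
Proof. by rewrite -[RHS](sum_delta (fun _ => 1) i); apply: eq_bigr => j _; rewrite mul1r. Qed.

Lemma aff_eq p q : aff p -> aff q -> p.@[fun _ => 0] = q.@[fun _ => 0] ->
  (forall i, p.@[dlt i] = q.@[dlt i]) -> p = q.
Proof.
move=> ap aq e0 ei.
have c0 : p@_0 = q@_0.
  move: e0; rewrite (aff_eval _ ap) (aff_eval _ aq) !big1 => [|j _|j _]; [by rewrite !addr0 | exact: mulr0 | exact: mulr0].
have ci : forall i, p@_U_(i) = q@_U_(i).
  by move=> i; move: (ei i); rewrite (aff_eval _ ap) (aff_eval _ aq) c0 /dlt !sum_delta => /addrI.
rewrite (aff_expand ap) (aff_expand aq) c0; congr (_ + _).
by apply: eq_bigr => j _; rewrite ci.
Qed.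

Lemma affC c : aff c%:MP.
Proof. by rewrite /aff msizeC; case: (c != 0). Qed.

Lemma affX i : aff 'X_i.
Proof. by rewrite /aff msizeX mdeg1. Qed.

Lemma affD p q : aff p -> aff q -> aff (p + q).
Proof. by move=> ap aq; apply: leq_trans (msizeD_le _ _) _; rewrite geq_max; apply/andP. Qed.

Lemma affZ c p : aff p -> aff (c *: p).
Proof. by move=> ap; apply: leq_trans (msizeZ_le _ _) _. Qed.

Lemma affN p : aff p -> aff (- p).
Proof. by rewrite /aff msizeN. Qed.

Lemma aff_sum (I : Type) (s : seq I) (P : pred I) (F : I -> {mpoly R[n]}) :
  (forall i, P i -> aff (F i)) -> aff (\sum_(i <- s | P i) F i).
Proof.
move=> H; apply: (big_ind aff) => //; first by rewrite /aff msize0.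
exact: affD.
Qed.

End Aff.

Section Mat.
Variables (R : realFieldType) (n : nat).
Variables (v : 'I_n.+1 -> 'I_n -> R) (lam : 'I_n.+1 -> {mpoly R[n]}).
Hypothesis hlam : forall i, (msize (lam i) <= 2)%N.
Hypothesis hv : forall i j, (lam i).@[v j] = (i == j)%:R.

Definition cv (p : {mpoly R[n]}) (l : 'I_n.+1) : R :=
  if unlift ord0 l is Some j then p@_U_(j) else p@_0.
Definition ev (x : 'I_n -> R) (l : 'I_n.+1) : R :=
  if unlift ord0 l is Some j then x j else 1.

Lemma aff_eval' p x : aff p -> p.@[x] = \sum_l cv p l * ev x l.
Proof.
move=> ap; rewrite aff_eval // big_ord_recl /cv /ev unlift_none mulr1.
by congr (_ + _); apply: eq_bigr => j _; rewrite liftK.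
Qed.

Definition Mm : 'M[R]_n.+1 := \matrix_(i, l) cv (lam i) l.
Definition Em : 'M[R]_n.+1 := \matrix_(l, l') ev (v l) l'.

Lemma MEt : Mm *m Em^T = 1%:M.
Proof.
apply/matrixP => i l; rewrite !mxE -hv (aff_eval' _ (hlam i)).
by apply: eq_bigr => l' _; rewrite !mxE.
Qed.

Lemma aff_zero q : aff q -> (forall l, q.@[v l] = 0) -> q = 0.
Proof.
move=> aq hq.
pose w : 'rV[R]_n.+1 := \row_l cv q l.
have w0 : w *m Em^T = 0.
  apply/matrixP => i l; rewrite !mxE; transitivity (q.@[v l]); last exact: hq l.
  by rewrite (aff_eval' _ aq); apply: eq_bigr => l' _; rewrite !mxE.
have : w = 0.
  by rewrite -[w]mulmx1 -(mulmx1C MEt) mulmxA w0 mul0mx.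
move/matrixP => wz.
rewrite (aff_expand aq).
have -> : q@_0 = 0 by have := wz ord0 ord0; rewrite !mxE /cv unlift_none.
rewrite add0r big1 => [|j _]; first exact: mpolyC0.
by have := wz ord0 (lift ord0 j); rewrite !mxE /cv liftK => ->; rewrite scale0r.
Qed.

Lemma sum_lam : \sum_i lam i = 1.
Proof.
apply/eqP; rewrite -subr_eq0; apply/eqP; apply: aff_zero.
  apply: affD; [by apply: aff_sum => i _; exact: hlam | by apply: affN; rewrite /aff msize1].
move=> l; rewrite mevalB meval1 raddf_sum /=.
under eq_bigr do rewrite hv.
by rewrite sum_delta1 subrr.
Qed.

Lemma X_lam j : \sum_i v i j *: lam i = 'X_j.
Proof.
apply/eqP; rewrite -subr_eq0; apply/eqP; apply: aff_zero.
  apply: affD; [apply: aff_sum => i _; exact/affZ/hlam | exact/affN/affX].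
move=> l; rewrite mevalB mevalXU raddf_sum /=.
under eq_bigr do rewrite mevalZ hv.
by rewrite sum_delta subrr.
Qed.

End Mat.

Section Span.
Variables (R : realFieldType) (n k : nat).
Variables (lam : 'I_n.+1 -> {mpoly R[n]}).
Local Notation A := {ffun 'I_n.+1 -> 'I_k.+1}.

Definition ltup : n.+1.-tuple {mpoly R[n]} := [tuple lam i | i < n.+1].
Definition Phi (Q : {mpoly R[n.+1]}) : {mpoly R[n]} := Q \mPo ltup.
Definition mon_of (a : A) : 'X_{1..n.+1} := [multinom (a i : nat) | i < n.+1].

Lemma Phi_X m : Phi 'X_[m] = \prod_i lam i ^+ m i.
Proof. by rewrite /Phi comp_mpolyX; apply: eq_bigr => i _; rewrite tnth_mktuple. Qed.

Lemma Phi_XU i : Phi 'X_i = lam i.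
Proof.
rewrite Phi_X (bigD1 i) //= mnm1E eqxx expr1 big1 ?mulr1 // => j /negbTE ji.
by rewrite mnm1E eq_sym ji expr0.
Qed.

Lemma bmono_Phi a : bmono lam a = Phi 'X_[mon_of a].
Proof. by rewrite Phi_X /bmono; apply: eq_bigr => i _; rewrite mnmE. Qed.

Lemma mdeg_mon a : a \in lat n k -> mdeg (mon_of a) = k.
Proof.
rewrite inE => /eqP E; rewrite -[RHS]E mdegE.
by apply: eq_bigr => i _; rewrite mnmE.
Qed.

Lemma mon_inj : injective mon_of.
Proof.
move=> a b /mnmP E; apply/ffunP => i; apply: val_inj.
by have := E i; rewrite !mnmE.
Qed.

Lemma mle_deg (m : 'X_{1..n.+1}) i : (m i <= mdeg m)%N.
Proof. by rewrite mdegE (bigD1 i) //= leq_addr. Qed.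

Lemma homog_span (Q : {mpoly R[n.+1]}) : Q \is k.-homog -> inPk lam (lat n k) (Phi Q).
Proof.
move=> hQ; exists (fun a => Q@_(mon_of a)).
have EQ : Q = \sum_(a in lat n k) Q@_(mon_of a) *: 'X_[mon_of a].
  apply/mpolyP => m; rewrite raddf_sum /=.
  under eq_bigr do rewrite mcoeffZ mcoeffX.
  have [dm|dm] := eqVneq (mdeg m) k.
    pose am : A := [ffun i => inord (m i)].
    have mam : mon_of am = m.
      apply/mnmP => i; rewrite mnmE ffunE inordK //.
      by rewrite ltnS -dm mle_deg.
    have aml : am \in lat n k.
      rewrite inE -[X in _ == X]dm mdegE; apply/eqP; apply: eq_bigr => i _.
      by rewrite ffunE inordK // ltnS -dm mle_deg.
    rewrite (bigD1 am aml) /= mam eqxx mulr1 big1 ?addr0 // => a /andP[_ ne].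
    have -> : (mon_of a == m) = false.
      by apply/negbTE; rewrite -mam; apply: contra ne => /eqP/mon_inj ->.
    exact: mulr0.
  rewrite (dhomog_nemf_coeff hQ dm) big1 // => a al.
  have -> : (mon_of a == m) = false.
    by apply/negbTE; apply: contra dm => /eqP <-; rewrite mdeg_mon.
  exact: mulr0.
rewrite {1}EQ /Phi raddf_sum /=; apply: eq_bigr => a _.
by rewrite comp_mpolyZ bmono_Phi.
Qed.

End Span.

Section Span2.
Variables (R : realFieldType) (n k : nat).
Variables (v : 'I_n.+1 -> 'I_n -> R) (lam : 'I_n.+1 -> {mpoly R[n]}).
Hypothesis hlam : forall i, (msize (lam i) <= 2)%N.
Hypothesis hv : forall i j, (lam i).@[v j] = (i == j)%:R.

Definition Wp (j : 'I_n) : {mpoly R[n.+1]} := \sum_i v i j *: 'X_i.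
Definition Sp : {mpoly R[n.+1]} := \sum_i 'X_i.
Definition Qm (m : 'X_{1..n}) : {mpoly R[n.+1]} :=
  (\prod_(j < n) Wp j ^+ m j) * Sp ^+ (k - mdeg m).

Lemma Wp_homog j : Wp j \is 1.-homog.
Proof.
apply: (big_ind (fun p : {mpoly R[n.+1]} => p \is 1.-homog)).
- exact: dhomog0.
- by move=> p q; apply: dhomogD.
- move=> i _; apply: dhomogZ; rewrite dhomogX /=; exact: (introT eqP (mdeg1 i)).
Qed.

Lemma Sp_homog : Sp \is 1.-homog.
Proof.
apply: (big_ind (fun p : {mpoly R[n.+1]} => p \is 1.-homog)).
- exact: dhomog0.
- by move=> p q; apply: dhomogD.
- move=> i _; rewrite dhomogX /=; exact: (introT eqP (mdeg1 i)).
Qed.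

Lemma Qm_homog m : (mdeg m <= k)%N -> Qm m \is k.-homog.
Proof.
move=> mk; rewrite /Qm.
have H2 : Sp ^+ (k - mdeg m) \is (k - mdeg m).-homog.
  by have := dhomogMn (k - mdeg m) Sp_homog; rewrite mul1n.
have H1 : \prod_(j < n) Wp j ^+ m j \is (mdeg m).-homog.
  rewrite mdegE.
  apply: (big_rec2 (fun d (p : {mpoly R[n.+1]}) => p \is d.-homog)).
    exact: dhomog1.
  move=> j d p _ hp; apply: dhomogM => //.
  by have := dhomogMn (m j) (Wp_homog j); rewrite mul1n.
by have := dhomogM H1 H2; rewrite subnKC.
Qed.

Lemma Phi_Qm m : (mdeg m <= k)%N -> Phi lam (Qm m) = 'X_[m].
Proof.
move=> mk; rewrite /Phi /Qm rmorphM rmorphXn rmorph_prod /=.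
have -> : Sp \mPo ltup lam = 1.
  rewrite /Sp raddf_sum /= -(sum_lam hlam hv); apply: eq_bigr => i _.
  exact: Phi_XU.
rewrite expr1n mulr1 mpolyXE_id; apply: eq_bigr => j _; rewrite rmorphXn /=.
congr (_ ^+ _); rewrite /Wp raddf_sum /= -(X_lam hlam hv); apply: eq_bigr => i _.
by rewrite comp_mpolyZ; congr (_ *: _); exact: Phi_XU.
Qed.

Lemma span_all p : (msize p <= k.+1)%N -> inPk lam (lat n k) p.
Proof.
move=> sp.
pose Q := \sum_(m <- msupp p) p@_m *: Qm m.
have hQ : Q \is k.-homog.
  rewrite /Q big_seq; apply: (big_ind (fun p : {mpoly R[n.+1]} => p \is k.-homog)).
  - exact: dhomog0.
  - by move=> p1 q1; apply: dhomogD.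
  - move=> m mp; apply: dhomogZ; apply: Qm_homog.
    by rewrite -ltnS; apply: leq_trans sp; apply: msize_mdeg_lt.
have -> : p = Phi lam Q.
  rewrite {1}(mpolyE p) /Q /Phi raddf_sum /= !big_seq; apply: eq_bigr => m mp.
  rewrite comp_mpolyZ; congr (_ *: _); rewrite -/(Phi lam _) Phi_Qm //.
  by rewrite -ltnS; apply: leq_trans sp; apply: msize_mdeg_lt.
exact: homog_span.
Qed.

End Span2.

Section Indep.
Variables (R : realFieldType) (n k : nat).
Variables (v : 'I_n.+1 -> 'I_n -> R) (lam : 'I_n.+1 -> {mpoly R[n]}).
Hypothesis hlam : forall i, (msize (lam i) <= 2)%N.
Hypothesis hv : forall i j, (lam i).@[v j] = (i == j)%:R.
Local Notation A := {ffun 'I_n.+1 -> 'I_k.+1}.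

Definition gfun (j : 'I_n) : {mpoly R[n]} :=
  (v ord0 j)%:MP + \sum_i (v (lift ord0 i) j - v ord0 j) *: 'X_i.
Definition gt : n.-tuple {mpoly R[n]} := [tuple gfun j | j < n].
Definition Gam (p : {mpoly R[n]}) := p \mPo gt.
Definition Sx : {mpoly R[n]} := \sum_i 'X_i.

Lemma comp_XU m (t : m.-tuple {mpoly R[n]}) i : 'X_i \mPo t = tnth t i.
Proof. by rewrite comp_mpolyXU (tnth_nth 0). Qed.

Lemma aff_Gam p : aff p -> aff (Gam p).
Proof.
move=> ap; rewrite (aff_expand ap) /Gam raddfD /= comp_mpolyC raddf_sum /=.
apply: affD; first exact: affC.
apply: aff_sum => j _; rewrite comp_mpolyZ; apply: affZ.
rewrite comp_XU tnth_mktuple /gfun; apply: affD; first exact: affC.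
by apply: aff_sum => i _; apply/affZ/affX.
Qed.

Lemma Gam_eval p y : (Gam p).@[y] = p.@[fun j => v ord0 j + \sum_i (v (lift ord0 i) j - v ord0 j) * y i].
Proof.
rewrite /Gam comp_mpoly_meval; apply: meval_eq => j.
rewrite tnth_mktuple /gfun mevalD mevalC raddf_sum /=; congr (_ + _).
by apply: eq_bigr => i _; rewrite mevalZ mevalXU.
Qed.

Lemma evS y : (1 - Sx).@[y] = 1 - \sum_i y i.
Proof.
rewrite mevalB meval1; congr (_ - _); rewrite /Sx raddf_sum /=.
by apply: eq_bigr => i _; rewrite mevalXU.
Qed.

Lemma Gam_lam l : Gam (lam l) = if unlift ord0 l is Some i then 'X_i else 1 - Sx.
Proof.
have aR : aff (if unlift ord0 l is Some i then 'X_i else 1 - Sx).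
  case: (unlift ord0 l) => [i|]; first exact: affX.
  apply: affD; first by rewrite /aff msize1.
  by apply/affN/aff_sum => i _; exact: affX.
apply: aff_eq (aff_Gam (hlam l)) aR _ _.
  rewrite Gam_eval (@meval_eq _ _ _ (v ord0)); last first.
    by move=> j; rewrite big1 ?addr0 // => i _; rewrite mulr0.
  rewrite hv; case: unliftP => [i ->|->].
    by rewrite mevalXU eq_sym (negbTE (neq_lift _ _)).
  by rewrite eqxx evS big1 ?subr0.

move=> i; rewrite Gam_eval (@meval_eq _ _ _ (v (lift ord0 i))); last first.
  move=> j; rewrite /dlt sum_delta; by rewrite addrC subrK.
rewrite hv; case: unliftP => [i' ->|->].
  by rewrite mevalXU /dlt (inj_eq lift_inj).
by rewrite (negbTE (neq_lift _ _)) evS /dlt sum_delta1 subrr.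
Qed.

Lemma GamX p m : Gam (p ^+ m) = Gam p ^+ m.
Proof. exact: rmorphXn. Qed.

Lemma Gam_prod (I : Type) (r : seq I) (P : pred I) (F : I -> {mpoly R[n]}) :
  Gam (\prod_(i <- r | P i) F i) = \prod_(i <- r | P i) Gam (F i).
Proof. exact: rmorph_prod. Qed.

Lemma Gam_sum (I : Type) (r : seq I) (P : pred I) (F : I -> {mpoly R[n]}) :
  Gam (\sum_(i <- r | P i) F i) = \sum_(i <- r | P i) Gam (F i).
Proof. exact: raddf_sum. Qed.

Lemma GamZ c p : Gam (c *: p) = c *: Gam p.
Proof. exact: comp_mpolyZ. Qed.

Lemma Gam0 : Gam 0 = 0.
Proof. exact: raddf0. Qed.

Definition ta (a : A) : 'X_{1..n} := [multinom (a (lift ord0 i) : nat) | i < n].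

Lemma Gam_bmono (a : A) : Gam (bmono lam a) = (1 - Sx) ^+ (a ord0) * 'X_[ta a].
Proof.
rewrite /bmono Gam_prod big_ord_recl GamX Gam_lam unlift_none.
congr (_ * _); rewrite mpolyXE_id; apply: eq_bigr => i _.
by rewrite GamX Gam_lam liftK mnmE.
Qed.

Lemma lat_split (a : A) : a \in lat n k -> (a ord0 + mdeg (ta a))%N = k.
Proof.
rewrite inE big_ord_recl => /eqP E; rewrite -[RHS]E; congr (_ + _)%N; rewrite mdegE.
by apply: eq_bigr => i _; rewrite mnmE.
Qed.

Lemma ta_inj (a b : A) : a \in lat n k -> b \in lat n k -> ta a = ta b -> a = b.
Proof.
move=> al bl E.
have E0 : (a ord0 : nat) = b ord0.
  by have := lat_split al; have := lat_split bl; rewrite E; lia.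
apply/ffunP => i; apply: val_inj; case: (unliftP ord0 i) => [j ->|->] //.
by move/mnmP: E => /(_ j); rewrite !mnmE.
Qed.

Lemma mcoeffMX_supp (p : {mpoly R[n]}) m m' : (p * 'X_[m])@_m' != 0 ->
  exists m'', m' = (m + m'')%MM.
Proof.
rewrite -mcoeff_msupp => H.
have := perm_mem (msuppMX p m) m'; rewrite H => /esym /mapP[m'' _ ->].
by exists m''.
Qed.

Lemma coef0_S d : ((1 - Sx) ^+ d)@_0 = 1.
Proof.
have -> : ((1 - Sx) ^+ d)@_0 = (mcoeff 0 (1 - Sx)) ^+ d by rewrite rmorphXn.
rewrite mcoeffB mcoeff1 eqxx /Sx raddf_sum big1 ?subr0 ?expr1n //.
move=> i _; exact: (etrans (@mcoeffX n R _ _) (congr1 (fun b : bool => b%:R) (mnm1_eq0 i))).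
Qed.

Lemma indep (c : A -> R) :
  \sum_(a in lat n k) c a *: bmono lam a = 0 -> forall a, a \in lat n k -> c a = 0.
Proof.
move=> H a0 al0; apply/eqP/negPn/negP => ca0.
have P0 : (a0 \in lat n k) && (c a0 != 0) by rewrite al0 ca0.
case: (@arg_maxnP _ a0 (fun a => (a \in lat n k) && (c a != 0)) (fun a : A => (a ord0 : nat)) P0) => bs /andP[bsl cbs] amax.
have := congr1 (fun p => (Gam p)@_(ta bs)) H.
rewrite /= Gam_sum Gam0 mcoeff0 raddf_sum (bigD1 bs bsl) /=.
have C1 : ((1 - Sx) ^+ (bs ord0) * 'X_[ta bs])@_(ta bs) = 1.
  by have := mcoeffMX ((1 - Sx) ^+ (bs ord0)) (ta bs) 0%MM; rewrite addm0 coef0_S.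
rewrite GamZ mcoeffZ Gam_bmono C1 mulr1.
rewrite big1 ?addr0; first by move/eqP; rewrite (negbTE cbs).
move=> a /andP[al ne]; rewrite GamZ mcoeffZ Gam_bmono.
have [ca|ca] := eqVneq (c a) 0; first by rewrite ca mul0r.
case: (eqVneq ((1 - Sx) ^+ (a ord0) * 'X_[ta a])@_(ta bs) 0) => [->|]; first exact: mulr0.
move/mcoeffMX_supp => [m'' E]; exfalso.
have le := amax a (introT andP (conj al ca)).
have dm := congr1 mdeg E; rewrite mdegD in dm.
have := lat_split al; have := lat_split bsl.
move=> h1 h2.
have m0 : mdeg m'' = 0%N by lia.
move: m0 => /eqP; rewrite mdeg_eq0 => /eqP m0; subst m''.
rewrite addm0 in E; move: ne; rewrite (ta_inj bsl al E) eqxx //.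
Qed.

End Indep.

Lemma msizeM_bnd (R : realFieldType) n (p q : {mpoly R[n]}) a b :
  (msize p <= a.+1)%N -> (msize q <= b.+1)%N -> (msize (p * q) <= (a + b).+1)%N.
Proof.
move=> hp hq.
have [->|p0] := eqVneq p 0; first by rewrite mul0r msize0.
have [->|q0] := eqVneq q 0; first by rewrite mulr0 msize0.
rewrite msizeM // -subn1 leq_subLR; apply: leq_trans (leq_add hp hq) _; by rewrite addSn addnS add1n.
Qed.

Lemma msizeX_bnd (R : realFieldType) n (p : {mpoly R[n]}) e :
  (msize p <= 2)%N -> (msize (p ^+ e) <= e.+1)%N.
Proof.
move=> hp; elim: e => [|e IH]; first by rewrite expr0 msize1.
by rewrite exprS; apply: (@msizeM_bnd R n p _ 1%N).
Qed.

Lemma msize_bmono (R : realFieldType) n k (lam : 'I_n.+1 -> {mpoly R[n]}) a :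
  (forall i, (msize (lam i) <= 2)%N) -> a \in lat n k -> (msize (bmono lam a) <= k.+1)%N.
Proof.
move=> hl; rewrite inE => /eqP E; rewrite -[X in (_ <= X.+1)%N]E /bmono.
apply: (big_rec2 (fun d (p : {mpoly R[n]}) => (msize p <= d.+1)%N)).
  by rewrite msize1.
move=> i d p _ hp; apply: msizeM_bnd hp; exact: msizeX_bnd.
Qed.

Lemma degle_inPk (R : realFieldType) n k (lam : 'I_n.+1 -> {mpoly R[n]}) (S : {set {ffun 'I_n.+1 -> 'I_k.+1}}) p :
  (forall i, (msize (lam i) <= 2)%N) -> S \subset lat n k -> inPk lam S p -> degle k p.
Proof.
move=> hl sub [c ->]; rewrite /degle.
apply: (big_ind (fun p : {mpoly R[n]} => (msize p <= k.+1)%N)).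
- by rewrite msize0.
- by move=> p1 q1 h1 h2; apply: leq_trans (msizeD_le _ _) _; rewrite geq_max h1 h2.
- move=> a aS; apply: leq_trans (msizeZ_le _ _) _.
  by apply: msize_bmono => //; apply: (subsetP sub).
Qed.

Unset Implicit Arguments. Set Strict Implicit. Set Printing Implicit Defensive.

Theorem mainTheorem1 (R : realFieldType) (n m k : nat) (r : nat -> nat)
  (v : 'I_n.+1 -> 'I_n -> R) (lam : 'I_n.+1 -> {mpoly R[n]}) :
  (1 <= n)%N ->
  r n = 0%N -> r n.-1 = m ->
  (forall l : nat, (l.+2 <= n)%N -> (2 * r l.+1 <= r l)%N) ->
  (2 * r 0%N + 1 <= k)%N ->
  (* lam are the barycentric coordinates of the simplex with vertices v *)
  (forall i, (msize (lam i) <= 2)%N) ->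
  (forall i j, (lam i).@[v j] = (i == j)%:R) ->
  [/\ (* pairwise disjoint *)
      (forall (l1 l2 : nat) f1 f2, f1 \in faces n l1 -> f2 \in faces n l2 ->
         (l1, f1) != (l2, f2) ->
         [disjoint Sset k r l1 f1 & Sset k r l2 f2]),
      (* union is T^n_k *)
      lat n k = \bigcup_(l < n.+1) \bigcup_(f in faces n l) Sset k r l f,
      (* each P_k(S_l(f)) lies in P_k(T) *)
      (forall (l : nat) f p, f \in faces n l -> inPk lam (Sset k r l f) p ->
         degle k p),
      (* P_k(T) = sum of the P_k(S_l(f)) *)
      (forall p : {mpoly R[n]}, degle k p ->
         exists pf : nat -> {set 'I_n.+1} -> {mpoly R[n]},
           (forall (l : nat) f, f \in faces n l -> inPk lam (Sset k r l f) (pf l f)) /\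
           p = \sum_(l < n.+1) \sum_(f in faces n l) pf l f)
    & (* the sum is direct *)
      (forall pf : nat -> {set 'I_n.+1} -> {mpoly R[n]},
         (forall (l : nat) f, f \in faces n l -> inPk lam (Sset k r l f) (pf l f)) ->
         \sum_(l < n.+1) \sum_(f in faces n l) pf l f = 0 ->
         forall (l : nat) f, f \in faces n l -> pf l f = 0)].
Proof.
move=> hn rn rm hr hk hlam hv; split.
- move=> l1 l2 f1 f2 h1 h2 ne; exact: (Sset_disj hn rn hr hk h1 h2 ne).
- exact: Sset_union.
- move=> l f p _; apply: degle_inPk => //; exact: Sset_sub.
- move=> p hp; have [c Ec] := span_all hlam hv hp.
  exists (fun l f => \sum_(a in Sset k r l f) c a *: bmono lam a); split.
    by move=> l f _; exists c.
  rewrite Ec (sum_part r (fun l f a => c a *: bmono lam a)).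
  apply: eq_bigr => a al.
  have [l0 [f0 f0l a0]] := Sset_cover r al.
  by rewrite (sum_single hn rn hr hk (fun l f => c a *: bmono lam a) f0l a0).
- move=> pf hpf hsum.
  have Hc : forall l f, exists c : {ffun 'I_n.+1 -> 'I_k.+1} -> R,
      f \in faces n l -> pf l f = \sum_(a in Sset k r l f) c a *: bmono lam a.
    move=> l f; have [ff|nf] := boolP (f \in faces n l).
      by have [c Ec] := hpf l f ff; exists c.
    by exists (fun _ => 0).
  pose c l f := proj1_sig (constructive_indefinite_description _ (Hc l f)).
  have Ec : forall l f, f \in faces n l -> pf l f = \sum_(a in Sset k r l f) c l f a *: bmono lam a.
    by move=> l f; exact: (proj2_sig (constructive_indefinite_description _ (Hc l f))).
  pose C a := \sum_(l < n.+1) \sum_(f in faces n l) c l f a *+ (a \in Sset k r l f).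
  have HC : \sum_(a in lat n k) C a *: bmono lam a = 0.
    rewrite -[RHS]hsum.
    transitivity (\sum_(l < n.+1) \sum_(f in faces n l) \sum_(a in Sset k r l f) c l f a *: bmono lam a).
      rewrite (sum_part r (fun l f a => c l f a *: bmono lam a)).
      apply: eq_bigr => a _; rewrite /C scaler_suml; apply: eq_bigr => l _.
      by rewrite scaler_suml; apply: eq_bigr => f _; rewrite scalerMnl.
    by apply: eq_bigr => l _; apply: eq_bigr => f ff; rewrite Ec.
  have C0 := indep hlam hv HC.
  move=> l f ff; rewrite Ec // big1 // => a af.
  have al : a \in lat n k by apply: (subsetP (Sset_sub k r l f)).
  have := C0 a al; rewrite /C (sum_single hn rn hr hk (fun l f => c l f a) ff af) => ->.
  exact: scale0r.
Qed.
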